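(* Let $a\in(0,1)$, $\kappa_2\in(0,1)$, and assume $\dfrac{4}{\kappa_2}\le r\le \dfrac{as}{\sqrt{5\log(8/\kappa_2)}}$. Then for every $\theta\in\mathcal{D}_{a,r}$, $$\|M(\theta)\|<\kappa_2\, r\,\|\theta^*\|.$$
   Context: Fix $d\ge1$, $\sigma>0$ and $\theta^*\in\mathbb{R}^d\setminus\{0\}$. Let $Y$ be distributed according to the mixture $\tfrac12 N(\theta^*,\sigma^2I_d)+\tfrac12 N(-\theta^*,\sigma^2I_d)$. Let $\omega(t):=1/(1+e^{-2t})$. The population EM operator is $M(\theta):=2\,\mathbb{E}\big[Y\,\omega(\langle\theta,Y\rangle/\sigma^2)\big]$. The signal-to-noise ratio is $s:=\|\theta^*\|/\sigma$. For $a\in(0,1)$ and $r\ge1$ define $\mathcal{H}_a:=\{\theta:\langle\theta,\theta^*\rangle\ge a\|\theta^*\|^2\}$, $\mathcal{B}_r:=\{\theta:\|\theta\|\le r\|\theta^*\|\}$ and $\mathcal{D}_{a,r}:=\mathcal{H}_a\cap\mathcal{B}_r$. *)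

(* Defs.v *)
(* classical reals. Vectors of R^d are functions nat -> R,
   only coordinates 0..d-1 being relevant. *)
From Stdlib Require Import Reals Lra.
Open Scope R_scope.

Fixpoint dot (d : nat) (u v : nat -> R) : R :=
  match d with
  | O => 0
  | S k => dot k u v + u k * v k
  end.

Definition vnorm (d : nat) (u : nat -> R) : R := sqrt (dot d u u).

Definition omega (t : R) : R := 1 / (1 + exp (-2 * t)).

Definition gauss_density (d : nat) (sigma : R) (mu y : nat -> R) : R :=
  exp (- dot d (fun i => y i - mu i) (fun i => y i - mu i) / (2 * sigma ^ 2))
  / (sqrt (2 * PI * sigma ^ 2)) ^ d.

Definition mix_density (d : nat) (sigma : R) (ts y : nat -> R) : R :=
  / 2 * gauss_density d sigma ts y + / 2 * gauss_density d sigma (fun i => - ts i) y.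

Definition is_improper_int (g : R -> R) (I : R) : Prop :=
  forall eps : R, 0 < eps -> exists A : R, forall a b : R, A <= a -> A <= b ->
    exists pr : Riemann_integrable g (- a) b, Rabs (RiemannInt pr - I) < eps.

Definition cons_vec (t : R) (y : nat -> R) : nat -> R :=
  fun i => match i with O => t | S j => y j end.

(* iterated improper integral of f over R^n (coordinates 0..n-1 of y):
   is_int_iter n f I  <->  int_{R^n} f(y) dy = I (as iterated integral) *)
Fixpoint is_int_iter (n : nat) (f : (nat -> R) -> R) (I : R) : Prop :=
  match n with
  | O => I = f (fun _ => 0)
  | S k => exists g : R -> R,
      (forall t : R, is_int_iter k (fun y => f (cons_vec t y)) (g t))
      /\ is_improper_int g I
  end.

(* m = M(theta) = 2 E[ Y omega(<theta,Y>/sigma^2) ], Y ~ mixture *)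
Definition is_EM (d : nat) (sigma : R) (ts theta m : nat -> R) : Prop :=
  forall i : nat, (i < d)%nat ->
    is_int_iter d
      (fun y => 2 * (y i * omega (dot d theta y / sigma ^ 2)) * mix_density d sigma ts y)
      (m i).

(* Main.v *)
From Coquelicot Require Import Coquelicot.
From Stdlib Require Import Reals Lra Psatz Classical FunctionalExtensionality Lia ClassicalEpsilon.
Require Import Defs.
Open Scope R_scope.

Lemma exRc (f : R -> R) a b : (forall z, continuous f z) -> ex_RInt f a b.
Proof. intros H. apply (@ex_RInt_continuous R_CompleteNormedModule). intros; apply H. Qed.

Lemma der_cont_pt f x l : is_derive f x l -> continuity_pt f x.
Proof. intros H. apply is_derive_Reals in H. apply derivable_continuous_pt. exists l; exact H. Qed.

Ltac toR := match goal with |- ?a = ?b => change (@eq R a b) end.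

Ltac expeq := repeat match goal with |- context[exp ?a] => match goal with |- context[exp ?b] =>
  assert_fails (constr_eq a b); replace a with b by (toR; field; lra) end end.

Lemma Rabs_def2b x y : Rabs x <= y -> -y <= x <= y.
Proof. unfold Rabs; destruct (Rcase_abs x); intros; lra. Qed.

Lemma exp_le x y : x <= y -> exp x <= exp y.
Proof. intros [H|H]. apply Rlt_le, exp_increasing, H. subst; lra. Qed.

Definition impI (g : R -> R) (I : R) := forall eps, 0 < eps -> exists A, forall a b, A <= a -> A <= b ->
  ex_RInt g (-a) b /\ Rabs (RInt g (-a) b - I) < eps.

Lemma impI_is g I : impI g I -> is_improper_int g I.
Proof.
  intros H eps Heps. destruct (H eps Heps) as [A HA]. exists A. intros a b Ha Hb.
  destruct (HA a b Ha Hb) as [Hex Hlt].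
  exists (ex_RInt_Reals_0 _ _ _ Hex). rewrite <- RInt_Reals. exact Hlt.
Qed.

Lemma is_impI g I : is_improper_int g I -> impI g I.
Proof.
  intros H eps Heps. destruct (H eps Heps) as [A HA]. exists A. intros a b Ha Hb.
  destruct (HA a b Ha Hb) as [pr Hlt]. split.
  - apply ex_RInt_Reals_1, pr.
  - rewrite (RInt_Reals _ _ _ pr). exact Hlt.
Qed.

Lemma RInt_plus' (f g : R -> R) a b : ex_RInt f a b -> ex_RInt g a b ->
  RInt (fun x => f x + g x) a b = RInt f a b + RInt g a b.
Proof. intros; apply (RInt_plus (V:=R_CompleteNormedModule)); auto. Qed.

Lemma RInt_scal' (f : R -> R) c a b : ex_RInt f a b ->
  RInt (fun x => c * f x) a b = c * RInt f a b.
Proof. intros; apply (RInt_scal (V:=R_CompleteNormedModule)); auto. Qed.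

Lemma ex_RInt_plus' (f g : R -> R) a b : ex_RInt f a b -> ex_RInt g a b ->
  ex_RInt (fun x => f x + g x) a b.
Proof. intros; apply (ex_RInt_plus (V:=R_CompleteNormedModule)); auto. Qed.

Lemma ex_RInt_scal' (f : R -> R) c a b : ex_RInt f a b ->
  ex_RInt (fun x => c * f x) a b.
Proof. intros; apply (ex_RInt_scal (V:=R_CompleteNormedModule)); auto. Qed.

Lemma impI_plus f g I J : impI f I -> impI g J -> impI (fun x => f x + g x) (I + J).
Proof.
  intros Hf Hg eps Heps.
  destruct (Hf (eps/2)) as [A1 H1]; [lra|]. destruct (Hg (eps/2)) as [A2 H2]; [lra|].
  exists (Rmax A1 A2). intros a b Ha Hb.
  destruct (H1 a b) as [E1 L1]; try (eapply Rle_trans; [apply Rmax_l|eauto]).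
  destruct (H2 a b) as [E2 L2]; try (eapply Rle_trans; [apply Rmax_r|eauto]).
  split. apply ex_RInt_plus'; auto.
  rewrite RInt_plus' by auto.
  replace (RInt f (-a) b + RInt g (-a) b - (I+J)) with ((RInt f (-a) b - I) + (RInt g (-a) b - J)) by ring.
  eapply Rle_lt_trans. apply Rabs_triang. lra.
Qed.

Lemma impI_scal f c I : impI f I -> impI (fun x => c * f x) (c * I).
Proof.
  intros Hf eps Heps.
  destruct (Hf (eps / (Rabs c + 1))) as [A H].
  { apply Rdiv_lt_0_compat; auto. pose proof (Rabs_pos c); lra. }
  exists A. intros a b Ha Hb. destruct (H a b Ha Hb) as [E L]. split.
  apply ex_RInt_scal'; auto.
  rewrite RInt_scal' by auto.
  replace (c * RInt f (-a) b - c * I) with (c * (RInt f (-a) b - I)) by ring.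
  rewrite Rabs_mult.
  pose proof (Rabs_pos c). pose proof (Rabs_pos (RInt f (-a) b - I)).
  apply Rlt_le_trans with ((Rabs c + 1) * (eps / (Rabs c + 1))).
  - apply Rle_lt_trans with (Rabs c * (eps / (Rabs c + 1))).
    + apply Rmult_le_compat_l; lra.
    + apply Rmult_lt_compat_r. apply Rdiv_lt_0_compat; lra. lra.
  - right; field; lra.
Qed.

Lemma impI_le f g I J : (forall x, f x <= g x) -> impI f I -> impI g J -> I <= J.
Proof.
  intros Hle Hf Hg. destruct (Rle_or_lt I J) as [|Hlt]; auto.
  destruct (Hf ((I-J)/2)) as [A1 H1]; [lra|]. destruct (Hg ((I-J)/2)) as [A2 H2]; [lra|].
  set (A := Rmax 0 (Rmax A1 A2)).
  assert (A1 <= A) by (unfold A; eapply Rle_trans; [apply Rmax_l|apply Rmax_r]).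
  assert (A2 <= A) by (unfold A; eapply Rle_trans; [apply Rmax_r|apply Rmax_r]).
  assert (0 <= A) by (unfold A; apply Rmax_l).
  destruct (H1 A A) as [E1 L1]; auto. destruct (H2 A A) as [E2 L2]; auto.
  assert (RInt f (-A) A <= RInt g (-A) A) by (apply RInt_le; auto; lra).
  apply Rabs_def2 in L1. apply Rabs_def2 in L2. lra.
Qed.

Lemma impI_ext f g I : (forall x, f x = g x) -> impI f I -> impI g I.
Proof.
  intros He H eps Heps. destruct (H eps Heps) as [A HA]. exists A. intros a b Ha Hb.
  destruct (HA a b Ha Hb) as [E L]. split.
  - eapply ex_RInt_ext; [|exact E]. intros; auto.
  - rewrite <- (RInt_ext f); auto.
Qed.

Lemma impI_ext2 f g I J : impI f I -> (forall x, f x = g x) -> I = J -> impI g J.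
Proof. intros H He <-. eapply impI_ext; eauto. Qed.

Lemma impI_unique f I J : impI f I -> impI f J -> I = J.
Proof.
  intros H1 H2. apply Rle_antisym; eapply impI_le; eauto; intros; lra.
Qed.

Lemma impI_deriv F f Lp Lm :
  (forall x, is_derive F x (f x)) -> (forall x, continuous f x) ->
  (forall eps, 0 < eps -> exists A, forall x, A <= x -> Rabs (F x - Lp) < eps) ->
  (forall eps, 0 < eps -> exists A, forall x, A <= x -> Rabs (F (-x) - Lm) < eps) ->
  impI f (Lp - Lm).
Proof.
  intros HD HC Hp Hm eps Heps.
  destruct (Hp (eps/2)) as [A1 H1]; [lra|]. destruct (Hm (eps/2)) as [A2 H2]; [lra|].
  exists (Rmax A1 A2). intros a b Ha Hb. split.
  - apply exRc; auto.
  - assert (E : RInt f (-a) b = F b - F (-a)).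
    { apply is_RInt_unique. apply (is_RInt_derive F f). intros; apply HD. intros; apply HC. }
    rewrite E.
    assert (Rabs (F b - Lp) < eps/2) by (apply H1; eapply Rle_trans; [apply Rmax_l|eauto]).
    assert (Rabs (F (-a) - Lm) < eps/2) by (apply H2; eapply Rle_trans; [apply Rmax_r|eauto]).
    apply Rabs_def2 in H. apply Rabs_def2 in H0. apply Rabs_def1; lra.
Qed.

Lemma atan_le_id y : 0 <= y -> atan y <= y.
Proof.
  intros Hy. destruct (Req_dec y 0) as [->|Hn]. rewrite atan_0; lra.
  destruct (MVT_gen atan 0 y (fun x => /(1+x^2))) as [c [Hc E]].
  - intros. apply is_derive_Reals, derivable_pt_lim_atan.
  - intros. apply (der_cont_pt _ _ (/(1+x^2))). apply is_derive_Reals, derivable_pt_lim_atan.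
  - rewrite atan_0 in E. assert (0 < /(1+c^2) <= 1).
    { split. apply Rinv_0_lt_compat. nra. rewrite <- Rinv_1. apply Rinv_le_contravar; nra. }
    nra.
Qed.

Lemma atan_lim_p eps : 0 < eps -> exists A, forall x, A <= x -> Rabs (atan x - PI/2) < eps.
Proof.
  intros He. exists (2/eps). intros x Hx.
  assert (0 < x). { apply Rlt_le_trans with (2/eps); auto. apply Rdiv_lt_0_compat; lra. }
  assert (0 < /x) by now apply Rinv_0_lt_compat.
  assert (Ea : atan x = PI/2 - atan (/x)).
  { rewrite <- atan_inv by auto. rewrite Rinv_inv. ring. }
  rewrite Ea.
  assert (atan (/x) <= /x) by (apply atan_le_id; lra).
  assert (0 < atan (/x)). { rewrite <- atan_0. now apply atan_increasing. }
  assert (/x <= eps/2).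
  { replace (eps/2) with (/(2/eps)) by (field; lra). apply Rinv_le_contravar; auto. apply Rdiv_lt_0_compat; lra. }
  apply Rabs_def1; lra.
Qed.

Lemma atan_lim_m eps : 0 < eps -> exists A, forall x, A <= x -> Rabs (atan (-x) - (-(PI/2))) < eps.
Proof.
  intros He. destruct (atan_lim_p eps He) as [A H]. exists A. intros x Hx.
  rewrite atan_opp. replace (- atan x - - (PI/2)) with (-(atan x - PI/2)) by ring.
  rewrite Rabs_Ropp. auto.
Qed.

Lemma cont_lor x : continuous (fun t => /(1+t*t)) x.
Proof. apply (ex_derive_continuous (fun t => /(1+t*t))). auto_derive. nra. Qed.

Lemma impI_lor : impI (fun t => /(1+t*t)) PI.
Proof.
  replace PI with (PI/2 - -(PI/2)) by field.
  apply (impI_deriv atan).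
  - intros. apply is_derive_Reals. replace (/(1+x*x)) with (/(1+x^2)) by (f_equal; ring). apply derivable_pt_lim_atan.
  - apply cont_lor.
  - apply atan_lim_p.
  - apply atan_lim_m.
Qed.

Lemma RInt_ge0' (f : R -> R) a b : a <= b -> (forall z, continuous f z) -> (forall x, 0 <= f x) -> 0 <= RInt f a b.
Proof. intros. apply RInt_ge_0; auto. apply exRc; auto. Qed.

Lemma Chasles' (f : R -> R) a b c : (forall z, continuous f z) -> RInt f a b + RInt f b c = RInt f a c.
Proof. intros. apply (RInt_Chasles (V:=R_CompleteNormedModule)); apply exRc; auto. Qed.

Lemma impI_exists_pos h M : (forall z, continuous h z) -> (forall x, 0 <= h x) ->
  (forall a, 0 <= a -> RInt h (-a) a <= M) -> exists I, impI h I.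
Proof.
  intros Hc Hp HM.
  set (E := fun y => exists a, 0 <= a /\ y = RInt h (-a) a).
  destruct (completeness E) as [L [HL1 HL2]].
  { exists M. intros y [a [Ha ->]]. auto. }
  { exists (RInt h (-0) 0). exists 0. split; auto; lra. }
  exists L. intros eps Heps.
  assert (exists a0, 0 <= a0 /\ L - eps < RInt h (-a0) a0) as [a0 [Ha0 Hl]].
  { apply NNPP. intros Hn. assert (L <= L - eps); [|lra].
    apply HL2. intros y [a [Ha ->]]. apply Rnot_lt_le. intros Hlt. apply Hn. exists a; split; auto. }
  exists a0. intros a b Ha Hb. split. apply exRc; auto.
  assert (Hup : RInt h (-a) b <= L).
  { set (m := Rmax a b).
    assert (RInt h (-m) m = RInt h (-m) (-a) + RInt h (-a) b + RInt h b m).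
    { rewrite !Chasles'; auto. }
    assert (0 <= RInt h (-m) (-a)). { apply RInt_ge0'; auto. unfold m. pose proof (Rmax_l a b); lra. }
    assert (0 <= RInt h b m). { apply RInt_ge0'; auto. apply Rmax_r. }
    assert (RInt h (-m) m <= L). { apply HL1. exists m. split; auto. unfold m. pose proof (Rmax_l a b); lra. }
    lra. }
  assert (Hlo : RInt h (-a0) a0 <= RInt h (-a) b).
  { assert (RInt h (-a) b = RInt h (-a) (-a0) + RInt h (-a0) a0 + RInt h a0 b).
    { rewrite !Chasles'; auto. }
    assert (0 <= RInt h (-a) (-a0)). { apply RInt_ge0'; auto. lra. }
    assert (0 <= RInt h a0 b). { apply RInt_ge0'; auto. }
    lra. }
  apply Rabs_def1; lra.
Qed.

Lemma impI_exists g C : (forall z, continuous g z) -> (forall x, Rabs (g x) <= C / (1 + x*x)) ->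
  exists I, impI g I.
Proof.
  intros Hc Hb.
  assert (HC : 0 <= C). { specialize (Hb 0). pose proof (Rabs_pos (g 0)). replace (C/(1+0*0)) with C in Hb by field. lra. }
  set (k := fun x => C * /(1+x*x)).
  assert (Hkc : forall z, continuous k z).
  { intros z. unfold k. apply (ex_derive_continuous (fun t => C * /(1+t*t))). auto_derive. nra. }
  assert (Hk : impI k (C * PI)) by (apply impI_scal, impI_lor).
  destruct (impI_exists_pos (fun x => g x + 2 * k x) (3 * C * PI)) as [I HI].
  - intros z. apply (continuous_plus g (fun x => 2 * k x)); auto.
    apply (continuous_scal_r 2 k); auto.
  - intros x. specialize (Hb x). unfold k. apply Rabs_def2b in Hb. unfold Rdiv in Hb. lra.
  - intros a Ha. rewrite RInt_plus'. 2,3: apply exRc; auto.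
    2:{ intros z. apply (continuous_scal_r 2 k); auto. }
    rewrite RInt_scal' by (apply exRc; auto).
    assert (RInt g (-a) a <= RInt k (-a) a).
    { apply RInt_le; try lra; try (apply exRc; auto). intros. specialize (Hb x). apply Rabs_def2b in Hb. unfold k; unfold Rdiv in Hb; lra. }
    assert (RInt k (-a) a = C * (atan a - atan (-a))).
    { unfold k. rewrite RInt_scal'. 2:{ apply exRc. apply cont_lor. } f_equal.
      apply is_RInt_unique. apply (is_RInt_derive atan (fun t => /(1+t*t))).
      - intros. apply is_derive_Reals. replace (/(1+x*x)) with (/(1+x^2)) by (f_equal; ring). apply derivable_pt_lim_atan.
      - intros; apply cont_lor. }
    pose proof (atan_bound a). pose proof (atan_bound (-a)).
    assert (C * (atan a - atan (-a)) <= C * PI) by (apply Rmult_le_compat_l; lra).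
    lra.
  - exists (I - 2 * (C*PI)).
    apply impI_ext with (f := fun x => (g x + 2 * k x) + (-2) * k x).
    { intros; ring. }
    apply impI_plus; auto. replace (-(2*(C*PI))) with (-2 * (C*PI)) by ring. now apply impI_scal.
Qed.

Definition uu (x t : R) := exp (-(x*x)*(1+t*t)) / (1+t*t).
Definition du (x t : R) := -2*x*exp (-(x*x)*(1+t*t)).

Lemma uu_der x t : is_derive (fun z => uu z t) x (du x t).
Proof.
  unfold uu, du. auto_derive.
  - nra.
  - field. nra.
Qed.

Lemma Derive_uu x t : Derive (fun z => uu z t) x = du x t.
Proof. apply is_derive_unique, uu_der. Qed.

Lemma cont_exp_pt y : continuity_pt exp y.
Proof. apply derivable_continuous_pt, derivable_pt_exp. Qed.

Lemma du_cont x t : continuity_2d_pt (fun u v => Derive (fun z => uu z v) u) x t.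
Proof.
  apply continuity_2d_pt_ext with (f := fun u v => du u v).
  { intros; now rewrite Derive_uu. }
  unfold du.
  apply continuity_2d_pt_mult.
  - apply continuity_2d_pt_mult. apply continuity_2d_pt_const. apply continuity_2d_pt_id1.
  - apply continuity_1d_2d_pt_comp. apply cont_exp_pt.
    apply continuity_2d_pt_mult.
    + apply continuity_2d_pt_opp. apply continuity_2d_pt_mult; apply continuity_2d_pt_id1.
    + apply continuity_2d_pt_plus. apply continuity_2d_pt_const.
      apply continuity_2d_pt_mult; apply continuity_2d_pt_id2.
Qed.

Lemma uu_cont x t : continuous (uu x) t.
Proof.
  unfold uu. apply (ex_derive_continuous (fun t => exp (-(x*x)*(1+t*t)) / (1+t*t))).
  auto_derive. nra.
Qed.

Lemma du_cont1 x t : continuous (du x) t.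
Proof.
  unfold du. apply (ex_derive_continuous (fun t => -2*x*exp (-(x*x)*(1+t*t)))).
  auto_derive. auto.
Qed.


Definition FF x := RInt (uu x) 0 1.
Definition gf (x : R) := exp (-(x*x)).
Definition SS x := RInt gf 0 x.

Lemma gf_cont t : continuous gf t.
Proof. unfold gf. apply (ex_derive_continuous (fun t => exp (-(t*t)))). auto_derive. auto. Qed.

Lemma FF_der x : is_derive FF x (RInt (du x) 0 1).
Proof.
  unfold FF.
  replace (RInt (du x) 0 1) with (RInt (fun t => Derive (fun u => uu u t) x) 0 1).
  2:{ apply RInt_ext. intros; now rewrite Derive_uu. }
  apply (is_derive_RInt_param uu 0 1 x).
  - apply filter_forall. intros y t _. eexists. apply uu_der.
  - intros; apply du_cont.
  - apply filter_forall. intros y. apply (@ex_RInt_continuous R_CompleteNormedModule). intros; apply uu_cont.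
Qed.

Lemma SS_der x : is_derive SS x (gf x).
Proof.
  unfold SS. apply (is_derive_RInt gf (fun b => RInt gf 0 b) 0).
  - apply filter_forall. intros b. apply (@RInt_correct R_CompleteNormedModule), exRc. intros; apply gf_cont.
  - apply gf_cont.
Qed.

Lemma SS_lin x : SS x = x * RInt (fun t => exp (-(x*x)*(t*t))) 0 1.
Proof.
  unfold SS.
  assert (E := RInt_comp_lin gf x 0 0 1).
  replace (x*0+0) with 0 in E by ring. replace (x*1+0) with x in E by ring.
  rewrite <- E.
  2:{ apply exRc. intros; apply gf_cont. }
  rewrite RInt_scal.
  2:{ apply exRc. intros. apply (ex_derive_continuous (fun y => gf (x*y+0))). unfold gf; auto_derive; auto. }
  unfold scal; simpl; unfold mult; simpl. f_equal. apply RInt_ext. intros; unfold gf. f_equal. ring.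
Qed.


Definition hh x := FF x + SS x * SS x.

Lemma hh_der x : is_derive hh x 0.
Proof.
  unfold hh.
  replace 0 with (RInt (du x) 0 1 + (gf x * SS x + SS x * gf x)).
  { apply is_derive_Reals. apply (derivable_pt_lim_plus FF (fun x => SS x * SS x)).
    apply is_derive_Reals, FF_der.
    replace (gf x * SS x + SS x * gf x) with (gf x * SS x + SS x * gf x) by ring.
    apply (derivable_pt_lim_mult SS SS); apply is_derive_Reals, SS_der. }
  rewrite SS_lin.
  replace (RInt (du x) 0 1) with ((-2*x*exp(-(x*x))) * RInt (fun t => exp (-(x*x)*(t*t))) 0 1).
  { unfold gf; ring. }
  rewrite <- (RInt_scal (V:=R_CompleteNormedModule)).
  2:{ apply exRc. intros. apply (ex_derive_continuous (fun t => exp (-(x*x)*(t*t)))). auto_derive; auto. }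
  apply RInt_ext. intros t _. unfold du, scal; simpl; unfold mult; simpl.
  rewrite Rmult_assoc, <- exp_plus. f_equal. f_equal. ring.
Qed.

Lemma hh_const x : hh x = hh 0.
Proof.
  destruct (MVT_gen hh 0 x (fun _ => 0)) as [c [_ Hc]].
  - intros; apply hh_der.
  - intros. apply (der_cont_pt _ _ 0), hh_der.
  - lra.
Qed.

Lemma hh0 : hh 0 = PI/4.
Proof.
  unfold hh, SS. rewrite RInt_point. unfold zero; simpl.
  rewrite Rmult_0_l, Rplus_0_r.
  unfold FF. rewrite <- atan_1.
  rewrite (RInt_ext (uu 0) (fun t => /(1+t*t))).
  2:{ intros t _. unfold uu. replace (-(0*0)*(1+t*t)) with 0 by ring. rewrite exp_0. unfold Rdiv; apply Rmult_1_l. }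
  replace (atan 1) with (atan 1 - atan 0) by (rewrite atan_0; ring).
  apply is_RInt_unique. apply (is_RInt_derive atan (fun t => /(1+t*t)) 0 1).
  - intros. apply is_derive_Reals. replace (/(1+x*x)) with (/(1+x^2)) by (f_equal; ring). apply derivable_pt_lim_atan.
  - intros. apply (ex_derive_continuous (fun t => /(1+t*t))). auto_derive. nra.
Qed.

Lemma gf_pos x : 0 < gf x.
Proof. apply exp_pos. Qed.

Lemma FF_bounds x : 0 <= FF x <= exp (-(x*x)).
Proof.
  unfold FF. split.
  - apply RInt_ge0'. lra. apply uu_cont. intros t. unfold uu. apply Rlt_le, Rdiv_lt_0_compat. apply exp_pos. nra.
  - replace (exp (-(x*x))) with (RInt (fun _ => exp (-(x*x))) 0 1).
    2:{ rewrite RInt_const. unfold scal; simpl; unfold mult; simpl. ring. }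
    apply RInt_le. lra. apply exRc, uu_cont. apply exRc. intros; apply continuous_const.
    intros t _. unfold uu. assert (1 <= 1+t*t) by nra.
    assert (exp (-(x*x)*(1+t*t)) <= exp (-(x*x))).
    { apply exp_le. nra. }
    pose proof (exp_pos (-(x*x)*(1+t*t))).
    unfold Rdiv. apply Rle_trans with (exp (- (x * x) * (1 + t * t)) * 1); [|lra].
    apply Rmult_le_compat_l. lra. rewrite <- Rinv_1. apply Rinv_le_contravar; lra.
Qed.

Lemma SS_ge0 x : 0 <= x -> 0 <= SS x.
Proof. intros. unfold SS. apply RInt_ge0'; auto. apply gf_cont. intros; apply Rlt_le, gf_pos. Qed.

Lemma SS_sq x : SS x * SS x = PI/4 - FF x.
Proof. pose proof (hh_const x). rewrite hh0 in H. unfold hh in H. lra. Qed.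

Lemma exp_neg_sq_le x : exp (-(x*x)) <= /(1+x*x).
Proof.
  rewrite exp_Ropp. apply Rinv_le_contravar. nra. apply exp_ineq1_le.
Qed.

Lemma SS_lim eps : 0 < eps -> exists A, forall x, A <= x -> Rabs (SS x - sqrt PI / 2) < eps.
Proof.
  intros He. set (s0 := sqrt PI / 2).
  assert (Hs0 : 0 < s0). { unfold s0. assert (0 < sqrt PI) by (apply sqrt_lt_R0, PI_RGT_0). lra. }
  assert (Hs2 : s0 * s0 = PI/4). { unfold s0. replace (sqrt PI / 2 * (sqrt PI / 2)) with (sqrt PI * sqrt PI / 4) by field.
     rewrite sqrt_sqrt. auto. pose proof PI_RGT_0; lra. }
  exists (1 + /(eps*s0)). intros x Hx.
  assert (Hp : 0 < /(eps*s0)) by (apply Rinv_0_lt_compat; nra).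
  assert (0 < x) by lra.
  pose proof (SS_ge0 x (Rlt_le _ _ H)). pose proof (SS_sq x). pose proof (FF_bounds x).
  pose proof (exp_neg_sq_le x).
  assert (/(1+x*x) <= /x). { apply Rinv_le_contravar; nra. }
  assert (/x < eps*s0).
  { replace (eps*s0) with (/ / (eps*s0)) by (rewrite Rinv_inv; auto). apply Rinv_lt_contravar. nra. lra. }
  assert (Rabs (SS x - s0) * (SS x + s0) = FF x).
  { rewrite <- (Rabs_pos_eq (SS x + s0)) by lra. rewrite <- Rabs_mult.
    replace ((SS x - s0) * (SS x + s0)) with (SS x * SS x - s0*s0) by ring. rewrite Hs2.
    rewrite H1. rewrite Rabs_left1; lra. }
  pose proof (Rabs_pos (SS x - s0)).
  apply Rnot_le_lt. intros Hn.
  assert (eps * s0 <= Rabs (SS x - s0) * (SS x + s0)). { apply Rmult_le_compat; lra. }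
  lra.
Qed.

Lemma gf_even x : gf (-x) = gf x.
Proof. unfold gf. f_equal. ring. Qed.

Lemma RInt_gf_neg a : RInt gf (-a) 0 = SS a.
Proof.
  unfold SS.
  assert (E := RInt_comp_lin gf (-1) 0 0 a).
  replace (-1*0+0) with 0 in E by ring. replace (-1*a+0) with (-a) in E by ring.
  rewrite <- (opp_RInt_swap (V:=R_CompleteNormedModule) gf). 2: apply exRc, gf_cont. rewrite <- E. 2: apply exRc, gf_cont.
  rewrite (RInt_ext _ (fun y => -1 * gf y)).
  2:{ intros. unfold scal; simpl; unfold mult; simpl. f_equal. replace (-1*x+0) with (-x) by ring. apply gf_even. }
  rewrite RInt_scal'. 2: apply exRc, gf_cont.
  unfold opp; simpl. ring.
Qed.

Lemma impI_gf : impI gf (sqrt PI).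
Proof.
  intros eps He. destruct (SS_lim (eps/2)) as [A HA]; [lra|].
  exists A. intros a b Ha Hb. split. apply exRc, gf_cont.
  rewrite <- (Chasles' gf (-a) 0 b) by apply gf_cont. rewrite RInt_gf_neg.
  assert (H := HA b Hb). specialize (HA a Ha).
  apply Rabs_def2 in HA. apply Rabs_def2 in H. unfold SS in *. apply Rabs_def1; lra.
Qed.

Lemma impI_comp f I u v : 0 < u -> (forall z, continuous f z) -> impI f I ->
  impI (fun x => f (u*x+v)) (I/u).
Proof.
  intros Hu Hc H eps He.
  destruct (H (eps*u)) as [A HA]. nra.
  exists ((Rabs A + Rabs v)/u). intros a b Ha Hb.
  assert (Hcomp : forall z, continuous (fun x => f (u*x+v)) z).
  { intros z. apply (continuous_comp (fun x => u*x+v) f). apply (ex_derive_continuous (fun x => u*x+v)). auto_derive; auto. apply Hc. }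
  split. apply exRc; auto.
  assert (Hua : A <= u*a - v).
  { apply Rmult_le_compat_l with (r:=u) in Ha; [|lra]. replace (u*((Rabs A + Rabs v)/u)) with (Rabs A + Rabs v) in Ha by (field; lra).
    pose proof (Rle_abs A). pose proof (Rle_abs v). lra. }
  assert (Hub : A <= u*b + v).
  { apply Rmult_le_compat_l with (r:=u) in Hb; [|lra]. replace (u*((Rabs A + Rabs v)/u)) with (Rabs A + Rabs v) in Hb by (field; lra).
    pose proof (Rle_abs A). pose proof (Rle_abs (-v)). rewrite Rabs_Ropp in H1. lra. }
  destruct (HA _ _ Hua Hub) as [E L].
  assert (E2 := RInt_comp_lin f u v (-a) b).
  replace (u*(-a)+v) with (-(u*a-v)) in E2 by ring.
  rewrite <- E2 in L by auto.
  rewrite (RInt_ext _ (fun y => u * f (u*y+v))) in L.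
  2:{ intros; unfold scal; simpl; unfold mult; simpl; auto. }
  rewrite RInt_scal' in L by (apply exRc; auto).
  replace (RInt (fun x => f (u*x+v)) (-a) b - I/u) with ((u * RInt (fun y => f (u * y + v)) (- a) b - I) / u) by (field; lra).
  unfold Rdiv. rewrite Rabs_mult, Rabs_inv, (Rabs_pos_eq u) by lra.
  apply Rmult_lt_reg_r with u; auto. rewrite Rmult_assoc, Rinv_l by lra. lra.
Qed.

Definition ee (mu sigma x : R) := exp (- ((x-mu)*(x-mu)) / (2*sigma^2)).
Definition ph (mu sigma x : R) := ee mu sigma x / sqrt (2*PI*sigma^2).

Lemma ee_cont mu sigma z : 0 < sigma -> continuous (ee mu sigma) z.
Proof. intros. unfold ee. apply (ex_derive_continuous (fun x => exp (- ((x-mu)*(x-mu)) / (2*sigma^2)))). auto_derive. nra. Qed.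

Lemma sqrt2PI sigma : 0 < sigma -> sqrt (2*PI*sigma^2) = sqrt PI * (sigma * sqrt 2).
Proof.
  intros. pose proof PI_RGT_0.
  rewrite (sqrt_mult_alt (2*PI)) by lra. rewrite (sqrt_mult_alt 2) by lra.
  rewrite sqrt_pow2 by lra. ring.
Qed.

Lemma sqrt2PI_pos sigma : 0 < sigma -> 0 < sqrt (2*PI*sigma^2).
Proof. intros. apply sqrt_lt_R0. pose proof PI_RGT_0. apply Rmult_lt_0_compat; [lra| apply pow_lt; lra]. Qed.

Lemma impI_ee mu sigma : 0 < sigma -> impI (ee mu sigma) (sqrt (2*PI*sigma^2)).
Proof.
  intros Hs. assert (Hq : 0 < sqrt 2) by (apply sqrt_lt_R0; lra).
  set (u := /(sigma*sqrt 2)).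
  assert (Hu : 0 < u) by (apply Rinv_0_lt_compat; nra).
  apply impI_ext with (f := fun x => gf (u*x + (-mu*u))).
  { intros x. unfold gf, ee. f_equal.
    replace (u*x + (-mu*u)) with ((x-mu)*u) by ring.
    assert (Huu : u*u = /(2*sigma^2)).
    { unfold u. rewrite <- Rinv_mult. f_equal.
      replace (sigma * sqrt 2 * (sigma * sqrt 2)) with (sigma*sigma*(sqrt 2 * sqrt 2)) by ring.
      rewrite sqrt_sqrt by lra. ring. }
    replace (-((x-mu)*u*((x-mu)*u))) with (-((x-mu)*(x-mu))*(u*u)) by ring.
    rewrite Huu. unfold Rdiv. ring. }
  replace (sqrt (2*PI*sigma^2)) with (sqrt PI / u).
  2:{ rewrite sqrt2PI by auto. unfold u. field. nra. }
  apply impI_comp; auto. apply gf_cont. apply impI_gf.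
Qed.

Lemma poly_gauss_bound k : 0 < k -> exists C, 0 <= C /\ forall z, (1+Rabs z)*(1+Rabs z)*exp(-(k*(z*z))) <= C.
Proof.
  intros Hk. exists (2 * (1 + /k)). split. assert (0 < /k) by (apply Rinv_0_lt_compat; auto). lra.
  intros z. rewrite exp_Ropp.
  pose proof (exp_ineq1_le (k*(z*z))). assert (0 < exp (k*(z*z))) by apply exp_pos.
  assert ((1+Rabs z)*(1+Rabs z) <= 2 + 2*(z*z)).
  { pose proof (Rabs_pos z). assert (Rabs z * Rabs z = z*z) by (rewrite <- Rabs_mult; apply Rabs_pos_eq; nra). pose proof (Rle_0_sqr (Rabs z - 1)). unfold Rsqr in *. nra. }
  apply Rle_trans with ((2 + 2*(z*z)) * / exp (k*(z*z))).
  apply Rmult_le_compat_r. left; apply Rinv_0_lt_compat; auto. auto.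
  apply Rmult_le_reg_r with (exp (k*(z*z))); auto. rewrite Rmult_assoc, Rinv_l by lra.
  assert (0 < /k) by (apply Rinv_0_lt_compat; auto).
  assert (z*z = /k * (k*(z*z))) by (field; lra).
  assert (0 <= z*z) by nra.
  nra.
Qed.

Lemma lim_of_bound F C mu : 0 <= C -> (forall x, Rabs (F x) <= C / (1 + Rabs (x - mu))) ->
  (forall eps, 0 < eps -> exists A, forall x, A <= x -> Rabs (F x - 0) < eps) /\
  (forall eps, 0 < eps -> exists A, forall x, A <= x -> Rabs (F (-x) - 0) < eps).
Proof.
  intros HC HF.
  assert (K : forall eps, 0 < eps -> forall y, C/eps <= Rabs y -> C/(1+Rabs y) < eps).
  { intros eps He y Hy. apply Rmult_le_compat_r with (r:=eps) in Hy; [|lra].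
    replace (C/eps*eps) with C in Hy by (field; lra).
    pose proof (Rabs_pos y). apply Rmult_lt_reg_r with (1+Rabs y). lra.
    unfold Rdiv. rewrite Rmult_assoc, Rinv_l by lra. nra. }
  split; intros eps He; exists (Rabs mu + C/eps); intros x Hx; rewrite Rminus_0_r;
    eapply Rle_lt_trans; try apply HF; apply K; auto.
  - pose proof (Rabs_triang_inv x mu). pose proof (Rle_abs x). lra.
  - replace (-x-mu) with (-(x+mu)) by ring. rewrite Rabs_Ropp.
    pose proof (Rabs_triang_inv x (-mu)). rewrite Rabs_Ropp in H. replace (x - - mu) with (x+mu) in H by ring.
    pose proof (Rle_abs x). lra.
Qed.

Lemma ee_decay mu sigma : 0 < sigma -> exists C, 0 <= C /\ forall x,
  Rabs (ee mu sigma x) <= C / (1 + Rabs (x - mu)) /\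
  Rabs ((x - mu) * ee mu sigma x) <= C / (1 + Rabs (x - mu)).
Proof.
  intros Hs. destruct (poly_gauss_bound (/(2*sigma^2))) as [C [HC H]].
  { apply Rinv_0_lt_compat; nra. }
  exists C. split; auto. intros x. specialize (H (x-mu)).
  assert (Ee : ee mu sigma x = exp (-(/(2*sigma^2) * ((x-mu)*(x-mu))))).
  { unfold ee. f_equal. field. nra. }
  rewrite Ee. pose proof (exp_pos (-(/(2*sigma^2) * ((x-mu)*(x-mu))))).
  set (E := exp (-(/(2*sigma^2) * ((x-mu)*(x-mu))))) in *.
  pose proof (Rabs_pos (x-mu)).
  split; apply Rmult_le_reg_r with (1+Rabs (x-mu)); try lra; unfold Rdiv; rewrite Rmult_assoc, Rinv_l, Rmult_1_r by lra.
  - rewrite Rabs_pos_eq by lra. nra.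
  - rewrite Rabs_mult, (Rabs_pos_eq E) by lra. nra.
Qed.

Lemma impI_m1 mu sigma : 0 < sigma -> impI (fun x => (x-mu) * ee mu sigma x) 0.
Proof.
  intros Hs. destruct (ee_decay mu sigma Hs) as [C [HC HD]].
  destruct (lim_of_bound (fun x => -(sigma^2) * ee mu sigma x) (sigma^2 * C) mu) as [L1 L2].
  { nra. }
  { intros x. rewrite Rabs_mult, Rabs_Ropp, Rabs_pos_eq by nra. unfold Rdiv. rewrite Rmult_assoc.
    apply Rmult_le_compat_l. nra. apply HD. }
  replace 0 with (0 - 0) by ring.
  apply (impI_deriv (fun x => -(sigma^2) * ee mu sigma x)); auto.
  - intros x. unfold ee. auto_derive. nra. expeq. toR. field. lra.
  - intros z. apply (ex_derive_continuous (fun x => (x-mu) * ee mu sigma x)). unfold ee. auto_derive. nra.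
Qed.

Lemma impI_m2 mu sigma : 0 < sigma ->
  impI (fun x => (x-mu)*(x-mu) * ee mu sigma x) (sigma^2 * sqrt (2*PI*sigma^2)).
Proof.
  intros Hs. destruct (ee_decay mu sigma Hs) as [C [HC HD]].
  destruct (lim_of_bound (fun x => -(sigma^2) * ((x-mu) * ee mu sigma x)) (sigma^2 * C) mu) as [L1 L2].
  { nra. }
  { intros x. rewrite Rabs_mult, Rabs_Ropp, (Rabs_pos_eq (sigma^2)) by nra. unfold Rdiv. rewrite Rmult_assoc.
    apply Rmult_le_compat_l. nra. apply HD. }
  assert (H1 : impI (fun x => -(sigma^2) * ee mu sigma x + (x-mu)*(x-mu) * ee mu sigma x) (0 - 0)).
  { apply (impI_deriv (fun x => -(sigma^2) * ((x-mu) * ee mu sigma x))); auto.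
    - intros x. unfold ee. auto_derive. nra. expeq. toR. field. lra.
    - intros z. apply (ex_derive_continuous (fun x => -(sigma^2) * ee mu sigma x + (x-mu)*(x-mu) * ee mu sigma x)). unfold ee. auto_derive. nra. }
  assert (H2 := impI_plus _ _ _ _ H1 (impI_scal _ (sigma^2) _ (impI_ee mu sigma Hs))).
  eapply impI_ext; [|replace (sigma^2 * sqrt (2*PI*sigma^2)) with (0 - 0 + sigma^2 * sqrt (2*PI*sigma^2)) by ring; exact H2].
  intros; simpl; ring.
Qed.

Lemma ph_cont mu sigma z : 0 < sigma -> continuous (ph mu sigma) z.
Proof. intros. unfold ph, ee. apply (ex_derive_continuous (fun x => exp (- ((x-mu)*(x-mu)) / (2*sigma^2)) / sqrt (2*PI*sigma^2))). auto_derive. nra. Qed.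

Lemma ph_int mu sigma : 0 < sigma -> impI (ph mu sigma) 1.
Proof.
  intros Hs. pose proof (sqrt2PI_pos sigma Hs).
  apply (impI_ext2 _ _ _ _ (impI_scal _ (/sqrt (2*PI*sigma^2)) _ (impI_ee mu sigma Hs))).
  intros; unfold ph; cbv beta; field; lra. field; lra.
Qed.

Lemma ph_m1 mu sigma : 0 < sigma -> impI (fun x => x * ph mu sigma x) mu.
Proof.
  intros Hs. pose proof (sqrt2PI_pos sigma Hs).
  apply (impI_ext2 _ _ _ _ (impI_plus _ _ _ _ (impI_scal _ (/sqrt (2*PI*sigma^2)) _ (impI_m1 mu sigma Hs))
                            (impI_scal _ mu _ (ph_int mu sigma Hs)))).
  intros; unfold ph; cbv beta; field; lra. ring.
Qed.

Lemma ph_m2 mu sigma : 0 < sigma -> impI (fun x => x * x * ph mu sigma x) (mu*mu + sigma^2).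
Proof.
  intros Hs. pose proof (sqrt2PI_pos sigma Hs).
  apply (impI_ext2 _ _ _ _ (impI_plus _ _ _ _ (impI_scal _ (/sqrt (2*PI*sigma^2)) _ (impI_m2 mu sigma Hs))
                            (impI_plus _ _ _ _ (impI_scal _ (2*mu) _ (ph_m1 mu sigma Hs))
                                               (impI_scal _ (-(mu*mu)) _ (ph_int mu sigma Hs))))).
  intros; unfold ph; cbv beta; field; lra. field; lra.
Qed.

Definition shift (u : nat -> R) : nat -> R := fun i => u (S i).
Definition upd (y : nat -> R) (j : nat) (s : R) : nat -> R := fun i => if Nat.eqb i j then s else y i.
Definition vsub (y mu : nat -> R) : nat -> R := fun i => y i - mu i.

Lemma dot_S_shift k u v : dot (S k) u v = u 0%nat * v 0%nat + dot k (shift u) (shift v).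
Proof.
  induction k. simpl. ring.
  change (dot (S (S k)) u v) with (dot (S k) u v + u (S k) * v (S k)).
  rewrite IHk. simpl. unfold shift. ring.
Qed.

Lemma dot_cons k a u b v : dot (S k) (cons_vec a u) (cons_vec b v) = a * b + dot k u v.
Proof. rewrite dot_S_shift. reflexivity. Qed.

Lemma dot_ext n u u' v v' : (forall i, (i < n)%nat -> u i = u' i /\ v i = v' i) -> dot n u v = dot n u' v'.
Proof.
  induction n; intros H. reflexivity. simpl. rewrite IHn by (intros; apply H; lia).
  destruct (H n) as [-> ->]; auto.
Qed.

Lemma dot_sym n u v : dot n u v = dot n v u.
Proof. induction n; simpl; auto. rewrite IHn; ring. Qed.

Lemma dot_nonneg n u : 0 <= dot n u u.
Proof. induction n; simpl. lra. nra. Qed.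

Lemma dot_sq_le n u i : (i < n)%nat -> u i * u i <= dot n u u.
Proof.
  induction n; intros H. lia. simpl. destruct (Nat.eq_dec i n).
  - subst. pose proof (dot_nonneg n u). lra.
  - assert (i < n)%nat by lia. specialize (IHn H0). nra.
Qed.

Lemma dot_scal_r n m v c : dot n m (fun i => v i * c) = dot n m v * c.
Proof. induction n; simpl. ring. rewrite IHn; ring. Qed.

Lemma dot_scal_l n m v c : dot n (fun i => c * m i) v = c * dot n m v.
Proof. induction n; simpl. ring. rewrite IHn; ring. Qed.

Lemma dot_plus_l n u u' v : dot n (fun i => u i + u' i) v = dot n u v + dot n u' v.
Proof. induction n; simpl. ring. rewrite IHn; ring. Qed.

Lemma dot_opp_r n m v : dot n m (fun i => - v i) = - dot n m v.
Proof. induction n; simpl. ring. rewrite IHn; ring. Qed.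

Lemma dot_quad n u v l : dot n (fun i => u i + l * v i) (fun i => u i + l * v i) =
  dot n u u + 2 * l * dot n u v + l * l * dot n v v.
Proof. induction n; simpl. ring. rewrite IHn; ring. Qed.

Lemma cauchy_schwarz n u v : dot n u v * dot n u v <= dot n u u * dot n v v.
Proof.
  pose proof (dot_nonneg n v) as Hv. destruct Hv as [Hv|Hv].
  - pose proof (dot_nonneg n (fun i => u i + (- (dot n u v / dot n v v)) * v i)).
    rewrite dot_quad in H.
    apply Rmult_le_reg_r with (/ dot n v v). apply Rinv_0_lt_compat; auto.
    replace (dot n u u * dot n v v * / dot n v v) with (dot n u u) by (field; lra).
    replace (dot n u v * dot n u v * / dot n v v) with
      (dot n u u - (dot n u u + 2 * - (dot n u v / dot n v v) * dot n u v + - (dot n u v / dot n v v) * - (dot n u v / dot n v v) * dot n v v)) by (field; lra).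
    lra.
  -
    assert (Hz : forall l, 0 <= dot n u u + 2 * l * dot n u v).
    { intros l. pose proof (dot_nonneg n (fun i => u i + l * v i)). rewrite dot_quad, <- Hv in H. lra. }
    destruct (Req_dec (dot n u v) 0) as [E|E].
    + rewrite E, <- Hv. lra.
    + specialize (Hz (- (dot n u u + 1) / (2 * dot n u v))).
      replace (2 * (- (dot n u u + 1) / (2 * dot n u v)) * dot n u v) with (-(dot n u u + 1)) in Hz by (field; auto).
      lra.
Qed.

Lemma upd_cons0 t y s : upd (cons_vec t y) 0 s = cons_vec s y.
Proof. apply functional_extensionality. intros [|i]; reflexivity. Qed.

Lemma upd_consS t y j s : upd (cons_vec t y) (S j) s = cons_vec t (upd y j s).
Proof. apply functional_extensionality. intros [|i]; reflexivity. Qed.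

Lemma upd_eq y j s : upd y j s j = s.
Proof. unfold upd. now rewrite Nat.eqb_refl. Qed.

Lemma upd_neq y j s i : i <> j -> upd y j s i = y i.
Proof. intros H. unfold upd. apply Nat.eqb_neq in H. now rewrite H. Qed.

Lemma vsub_upd y mu j s : vsub (upd y j s) mu = upd (vsub y mu) j (s - mu j).
Proof. apply functional_extensionality. intros i. unfold vsub, upd. destruct (Nat.eqb_spec i j); subst; auto. Qed.

Lemma vsub_cons t y mu : vsub (cons_vec t y) mu = cons_vec (t - mu 0%nat) (vsub y (shift mu)).
Proof. apply functional_extensionality. intros [|i]; reflexivity. Qed.

Lemma dot_upd_self n u j s : (j < n)%nat ->
  dot n (upd u j s) (upd u j s) = dot n u u - u j * u j + s * s.
Proof.
  induction n; intros H. lia. simpl. destruct (Nat.eq_dec j n).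
  - subst. rewrite upd_eq. rewrite (dot_ext n (upd u n s) u (upd u n s) u).
    ring. intros i Hi. rewrite upd_neq by lia. auto.
  - rewrite IHn by lia. rewrite upd_neq by lia. ring.
Qed.

Lemma dot_upd_r n m y j s : (j < n)%nat -> dot n m (upd y j s) = dot n m y + m j * (s - y j).
Proof.
  induction n; intros H. lia. simpl. destruct (Nat.eq_dec j n).
  - subst. rewrite upd_eq. rewrite (dot_ext n m m (upd y n s) y). ring.
    intros i Hi. rewrite upd_neq by lia. auto.
  - rewrite IHn by lia. rewrite upd_neq by lia. ring.
Qed.

Lemma int_ext n f g I : (forall y, f y = g y) -> is_int_iter n f I -> is_int_iter n g I.
Proof.
  revert f g I. induction n; intros f g I He H; simpl in *.
  - rewrite H; auto.
  - destruct H as [h [Hin Hout]]. exists h. split; auto.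
    intros t. apply (IHn (fun y => f (cons_vec t y))); auto.
Qed.

Lemma int_ext2 n f g I J : is_int_iter n f I -> (forall y, f y = g y) -> I = J -> is_int_iter n g J.
Proof. intros H He <-. eapply int_ext; eauto. Qed.

Lemma int_plus n f g I J : is_int_iter n f I -> is_int_iter n g J ->
  is_int_iter n (fun y => f y + g y) (I + J).
Proof.
  revert f g I J. induction n; intros f g I J Hf Hg; simpl in *.
  - subst; auto.
  - destruct Hf as [h1 [Hin1 Hout1]]. destruct Hg as [h2 [Hin2 Hout2]].
    exists (fun t => h1 t + h2 t). split.
    + intros t. apply (IHn (fun y => f (cons_vec t y)) (fun y => g (cons_vec t y))); auto.
    + apply impI_is. apply impI_plus; apply is_impI; auto.
Qed.

Lemma int_scal n f c I : is_int_iter n f I -> is_int_iter n (fun y => c * f y) (c * I).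
Proof.
  revert f I. induction n; intros f I Hf; simpl in *.
  - subst; auto.
  - destruct Hf as [h [Hin Hout]]. exists (fun t => c * h t). split.
    + intros t. apply (IHn (fun y => f (cons_vec t y))); auto.
    + apply impI_is. apply impI_scal; apply is_impI; auto.
Qed.

Lemma int_le n f g I J : (forall y, f y <= g y) -> is_int_iter n f I -> is_int_iter n g J -> I <= J.
Proof.
  revert f g I J. induction n; intros f g I J Hle Hf Hg; simpl in *.
  - subst; auto.
  - destruct Hf as [h1 [Hin1 Hout1]]. destruct Hg as [h2 [Hin2 Hout2]].
    apply (impI_le h1 h2); try apply is_impI; auto.
    intros t. apply (IHn (fun y => f (cons_vec t y)) (fun y => g (cons_vec t y))); auto.
Qed.

Lemma impI_zero : impI (fun _ => 0) 0.
Proof.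
  apply (impI_ext2 _ _ _ _ (impI_scal _ 0 _ impI_lor)). intros; ring. ring.
Qed.

Lemma int_zero n : is_int_iter n (fun _ => 0) 0.
Proof.
  induction n; simpl. auto. exists (fun _ => 0). split; auto. apply impI_is, impI_zero.
Qed.

Lemma int_abs_le n f g I J : (forall y, Rabs (f y) <= g y) -> is_int_iter n f I -> is_int_iter n g J -> Rabs I <= J.
Proof.
  intros H Hf Hg. apply Rabs_le. split.
  - assert (- J <= I); [|lra].
    replace (-J) with (-1 * J) by ring. apply (int_le n (fun y => -1 * g y) f); auto.
    intros y. specialize (H y). apply Rabs_def2b in H. lra. apply int_scal; auto.
  - apply (int_le n f g); auto. intros y. specialize (H y). apply Rabs_def2b in H. lra.
Qed.

Definition Ew (mu : nat -> R) (c : R) (n : nat) (y : nat -> R) : R :=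
  exp (-(c * dot n (vsub y mu) (vsub y mu))).

Lemma Ew_pos mu c n y : 0 < Ew mu c n y.
Proof. apply exp_pos. Qed.

Lemma Ew_cons mu c k t y : Ew mu c (S k) (cons_vec t y) =
  exp (-(c * ((t - mu 0%nat) * (t - mu 0%nat)))) * Ew (shift mu) c k y.
Proof. unfold Ew. rewrite vsub_cons, dot_cons, <- exp_plus. f_equal. ring. Qed.

Lemma impI_gexp c a : 0 < c -> impI (fun t => exp (-(c*((t-a)*(t-a))))) (sqrt PI / sqrt c).
Proof.
  intros Hc. assert (Hs : 0 < sqrt c) by (apply sqrt_lt_R0; auto).
  apply (impI_ext2 _ _ _ _ (impI_comp gf (sqrt PI) (sqrt c) (- sqrt c * a) Hs gf_cont impI_gf)).
  - intros t. unfold gf. f_equal.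
    replace (sqrt c * t + - sqrt c * a) with (sqrt c * (t - a)) by ring.
    replace (sqrt c * (t - a) * (sqrt c * (t - a))) with ((sqrt c * sqrt c) * ((t-a)*(t-a))) by ring.
    rewrite sqrt_sqrt; lra.
  - reflexivity.
Qed.

Lemma Ew_int k : forall mu c, 0 < c -> exists J, is_int_iter k (Ew mu c k) J.
Proof.
  induction k; intros mu c Hc.
  - exists (Ew mu c 0 (fun _ => 0)). reflexivity.
  - destruct (IHk (shift mu) c Hc) as [J HJ].
    exists (J * (sqrt PI / sqrt c)). simpl.
    exists (fun t => J * exp (-(c * ((t - mu 0%nat) * (t - mu 0%nat))))). split.
    + intros t. apply (int_ext2 _ _ _ _ _ (int_scal _ _ (exp (-(c * ((t - mu 0%nat) * (t - mu 0%nat))))) _ HJ)).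
      intros y. rewrite Ew_cons. ring. ring.
    + apply impI_is. apply impI_scal. apply impI_gexp; auto.
Qed.

Definition Cls (n : nat) (mu : nat -> R) (c K L : R) (f : (nat -> R) -> R) : Prop :=
  (forall y, Rabs (f y) <= K * Ew mu c n y) /\
  (forall y j s, (j < n)%nat -> Rabs (s - y j) <= 1 ->
     Rabs (f (upd y j s) - f y) <= L * Rabs (s - y j) * Ew mu c n y).

Lemma cont_of_lip (g : R -> R) t M : 0 <= M ->
  (forall t', Rabs (t' - t) <= 1 -> Rabs (g t' - g t) <= M * Rabs (t' - t)) -> continuous g t.
Proof.
  intros HM H. apply continuity_pt_filterlim.
  unfold continuity_pt, continue_in, limit1_in, limit_in. intros eps He.
  exists (Rmin 1 (eps / (M + 1))). split.
  { apply Rmin_pos. lra. apply Rdiv_lt_0_compat; lra. }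
  intros x [_ Hx]. simpl in *. unfold R_dist in *.
  assert (Hx1 : Rabs (x - t) < 1) by (eapply Rlt_le_trans; [exact Hx| apply Rmin_l]).
  assert (Hx2 : Rabs (x - t) < eps / (M+1)) by (eapply Rlt_le_trans; [exact Hx| apply Rmin_r]).
  eapply Rle_lt_trans. apply H. lra.
  pose proof (Rabs_pos (x - t)).
  apply Rle_lt_trans with ((M+1) * Rabs (x - t)). nra.
  apply Rmult_lt_reg_l with (/(M+1)). apply Rinv_0_lt_compat; lra.
  rewrite <- Rmult_assoc, Rinv_l, Rmult_1_l by lra. unfold Rdiv in Hx2. lra.
Qed.

Lemma gexp_dom c a : 0 < c -> exists C0, 0 <= C0 /\ forall t,
  exp (-(c*((t-a)*(t-a)))) <= C0 / (1 + t*t).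
Proof.
  intros Hc. exists ((1 + 2*(a*a)) * (1 + 2/c)). split.
  { assert (0 < 2/c) by (apply Rdiv_lt_0_compat; lra). nra. }
  intros t. set (z := t - a).
  rewrite exp_Ropp. pose proof (exp_ineq1_le (c*(z*z))).
  assert (0 <= z*z) by nra.
  assert (Hk : 1 + t*t <= (1 + 2*(a*a)) * (1 + 2/c) * (1 + c*(z*z))).
  { replace (t*t) with ((z+a)*(z+a)) by (unfold z; ring).
    assert (0 < 2/c) by (apply Rdiv_lt_0_compat; lra).
    assert ((z+a)*(z+a) <= 2*(z*z) + 2*(a*a)) by (pose proof (Rle_0_sqr (z-a)); unfold Rsqr in *; nra).
    assert (1 + 2*(z*z) <= (1 + 2/c) * (1 + c*(z*z))).
    { replace ((1 + 2/c) * (1 + c*(z*z))) with (1 + 2/c + c*(z*z) + 2*(z*z)) by (field; lra). nra. }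
    assert (0 <= a*a) by nra. nra. }
  apply Rle_trans with (/(1 + c*(z*z))).
  { apply Rinv_le_contravar; nra. }
  assert (P1 : 0 < 1 + c*(z*z)) by nra. assert (P2 : 0 < 1 + t*t) by nra.
  unfold Rdiv. apply Rmult_le_reg_r with ((1 + c*(z*z)) * (1+t*t)). apply Rmult_lt_0_compat; lra.
  replace (/ (1 + c * (z * z)) * ((1 + c * (z * z)) * (1 + t * t))) with (1 + t*t) by (field; lra).
  replace ((1 + 2 * (a * a)) * (1 + 2 / c) * / (1 + t * t) * ((1 + c * (z * z)) * (1 + t * t)))
    with ((1 + 2 * (a * a)) * (1 + 2 / c) * (1 + c * (z * z))) by (field; lra).
  eapply Rle_trans; [exact Hk|]. right. field. lra.
Qed.

Theorem exist_int n : forall mu c K L f, 0 < c -> Cls n mu c K L f -> exists I, is_int_iter n f I.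
Proof.
  induction n; intros mu c K L f Hc [Hdom Hlip].
  - exists (f (fun _ => 0)). reflexivity.
  - set (e := fun t => exp (-(c*((t - mu 0%nat)*(t - mu 0%nat))))).
    assert (He : forall t, 0 < e t) by (intros; apply exp_pos).
    assert (HK : 0 <= K).
    { specialize (Hdom (fun _ => 0)). pose proof (Rabs_pos (f (fun _ => 0))).
      pose proof (Ew_pos mu c (S n) (fun _ => 0)). nra. }
    assert (Hcls : forall t, Cls n (shift mu) c (K * e t) (L * e t) (fun y => f (cons_vec t y))).
    { intros t. split.
      - intros y. specialize (Hdom (cons_vec t y)). rewrite Ew_cons in Hdom. fold (e t) in Hdom. lra.
      - intros y j s Hj Hs. rewrite <- upd_consS.
        specialize (Hlip (cons_vec t y) (S j) s ltac:(lia) Hs). rewrite Ew_cons in Hlip.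
        fold (e t) in Hlip. simpl in Hlip. lra. }
    assert (HI : forall t, exists I, is_int_iter n (fun y => f (cons_vec t y)) I).
    { intros t. apply (IHn (shift mu) c (K * e t) (L * e t)); auto. }
    set (g := fun t => proj1_sig (constructive_indefinite_description _ (HI t))).
    assert (Hg : forall t, is_int_iter n (fun y => f (cons_vec t y)) (g t)).
    { intros t. unfold g. destruct (constructive_indefinite_description _ (HI t)); auto. }
    destruct (Ew_int n (shift mu) c Hc) as [J HJ].
    assert (HJ0 : 0 <= J).
    { apply (int_le n (fun _ => 0) (Ew (shift mu) c n)); auto. intros; left; apply Ew_pos. apply int_zero. }
    assert (Hbd : forall t, Rabs (g t) <= K * e t * J).
    { intros t. apply (int_abs_le n (fun y => f (cons_vec t y)) (fun y => K * e t * Ew (shift mu) c n y)); auto.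
      - intros y. destruct (Hcls t) as [D _]. apply D.
      - apply int_scal; auto. }
    assert (Hlg : forall t t', Rabs (t' - t) <= 1 -> Rabs (g t' - g t) <= (L * e t * J) * Rabs (t' - t)).
    { intros t t' Ht.
      assert (Hd := int_plus _ _ _ _ _ (Hg t') (int_scal _ _ (-1) _ (Hg t))).
      replace (g t' - g t) with (g t' + -1 * g t) by ring.
      replace (L * e t * J * Rabs (t' - t)) with ((L * Rabs (t' - t) * e t) * J) by ring.
      apply (int_abs_le n (fun y => f (cons_vec t' y) + -1 * f (cons_vec t y)) (fun y => (L * Rabs (t' - t) * e t) * Ew (shift mu) c n y)); auto.
      - intros y. specialize (Hlip (cons_vec t y) 0%nat t' ltac:(lia) Ht). rewrite upd_cons0, Ew_cons in Hlip.
        fold (e t) in Hlip. simpl in Hlip. replace (f (cons_vec t' y) + -1 * f (cons_vec t y)) with (f (cons_vec t' y) - f (cons_vec t y)) by ring. lra.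
      - apply int_scal; auto. }
    assert (Hgc : forall t, continuous g t).
    { intros t. apply (cont_of_lip g t (Rabs (L * e t * J))). apply Rabs_pos.
      intros t' Ht'. eapply Rle_trans. apply Hlg; auto. apply Rmult_le_compat_r. apply Rabs_pos. apply Rle_abs. }
    destruct (gexp_dom c (mu 0%nat) Hc) as [C0 [HC0 HD0]].
    destruct (impI_exists g (K * J * C0)) as [I HIg]; auto.
    { intros x. eapply Rle_trans. apply Hbd. specialize (HD0 x). fold (e x) in HD0.
      unfold Rdiv. replace (K * J * C0 * / (1 + x * x)) with ((K * J) * (C0 / (1 + x*x))) by (unfold Rdiv; ring).
      replace (K * e x * J) with ((K*J) * e x) by ring. apply Rmult_le_compat_l; nra. }
    exists I. simpl. exists g. split; auto. apply impI_is; auto.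
Qed.

Lemma exp_lip a b : Rabs (exp a - exp b) <= Rabs (a - b) * (exp a + exp b).
Proof.
  assert (H1 : exp a - exp b <= (a - b) * exp a).
  { pose proof (exp_ineq1_le (b - a)). rewrite Rminus_def, exp_plus in H.
    pose proof (exp_pos a). rewrite exp_Ropp in H.
    assert (exp b >= (1 + (b - a)) * exp a).
    { apply Rmult_le_compat_r with (r := exp a) in H; [|lra].
      rewrite Rmult_assoc, Rinv_l in H by lra. lra. }
    lra. }
  assert (H2 : exp b - exp a <= (b - a) * exp b).
  { pose proof (exp_ineq1_le (a - b)). rewrite Rminus_def, exp_plus in H.
    pose proof (exp_pos b). rewrite exp_Ropp in H.
    assert (exp a >= (1 + (a - b)) * exp b).
    { apply Rmult_le_compat_r with (r := exp b) in H; [|lra].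
      rewrite Rmult_assoc, Rinv_l in H by lra. lra. }
    lra. }
  pose proof (exp_pos a). pose proof (exp_pos b).
  apply Rabs_le. destruct (Rcase_abs (a - b)).
  - rewrite (Rabs_left (a - b)) by lra. assert (0 <= -(a-b) * exp a) by (apply Rmult_le_pos; lra).
    assert (0 <= -(a-b) * exp b) by (apply Rmult_le_pos; lra). split; lra.
  - rewrite (Rabs_right (a - b)) by lra. assert (0 <= (a-b) * exp a) by (apply Rmult_le_pos; lra).
    assert (0 <= (a-b) * exp b) by (apply Rmult_le_pos; lra). split; lra.
Qed.

Lemma Ew_mono mu c c' n y : c' <= c -> Ew mu c n y <= Ew mu c' n y.
Proof.
  intros H. unfold Ew. apply exp_le. pose proof (dot_nonneg n (vsub y mu)). nra.
Qed.

Lemma Cls_scal n mu c K L f a : Cls n mu c K L f -> Cls n mu c (Rabs a * K) (Rabs a * L) (fun y => a * f y).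
Proof.
  intros [D Li]. split.
  - intros y. rewrite Rabs_mult. rewrite Rmult_assoc. apply Rmult_le_compat_l. apply Rabs_pos. auto.
  - intros y j s Hj Hs. replace (a * f (upd y j s) - a * f y) with (a * (f (upd y j s) - f y)) by ring.
    rewrite Rabs_mult. replace (Rabs a * L * Rabs (s - y j) * Ew mu c n y) with (Rabs a * (L * Rabs (s - y j) * Ew mu c n y)) by ring.
    apply Rmult_le_compat_l. apply Rabs_pos. auto.
Qed.

Lemma Cls_mul_bdd n mu c K L f h B M : Cls n mu c K L f -> 0 <= K ->
  (forall y, Rabs (h y) <= B) ->
  (forall y j s, (j < n)%nat -> Rabs (s - y j) <= 1 -> Rabs (h (upd y j s) - h y) <= M * Rabs (s - y j)) ->
  Cls n mu c (B * K) (B * L + M * K) (fun y => f y * h y).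
Proof.
  intros [D Li] HK HB HM. assert (B0 : 0 <= B) by (pose proof (HB (fun _ => 0)); pose proof (Rabs_pos (h (fun _ => 0))); lra).
  split.
  - intros y. rewrite Rabs_mult. pose proof (D y). pose proof (HB y). pose proof (Rabs_pos (f y)). pose proof (Rabs_pos (h y)).
    pose proof (Ew_pos mu c n y). nra.
  - intros y j s Hj Hs.
    replace (f (upd y j s) * h (upd y j s) - f y * h y) with
      ((f (upd y j s) - f y) * h (upd y j s) + f y * (h (upd y j s) - h y)) by ring.
    eapply Rle_trans. apply Rabs_triang. rewrite !Rabs_mult.
    pose proof (Li y j s Hj Hs). pose proof (HM y j s Hj Hs). pose proof (HB (upd y j s)). pose proof (D y).
    pose proof (Rabs_pos (f (upd y j s) - f y)). pose proof (Rabs_pos (h (upd y j s))). pose proof (Rabs_pos (f y)).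
    pose proof (Rabs_pos (h (upd y j s) - h y)). pose proof (Ew_pos mu c n y). pose proof (Rabs_pos (s - y j)).
    assert (Rabs (f (upd y j s) - f y) * Rabs (h (upd y j s)) <= (L * Rabs (s - y j) * Ew mu c n y) * B) by (apply Rmult_le_compat; lra).
    assert (Rabs (f y) * Rabs (h (upd y j s) - h y) <= (K * Ew mu c n y) * (M * Rabs (s - y j))) by (apply Rmult_le_compat; lra).
    nra.
Qed.

Lemma coord_bound n mu c i : 0 < c -> (i < n)%nat -> exists C, 0 <= C /\ forall y,
  (1 + Rabs (y i)) * Ew mu c n y <= C * Ew mu (c/2) n y.
Proof.
  intros Hc Hi. destruct (poly_gauss_bound (c/2)) as [C [HC HCb]]. lra.
  exists (C * (1 + Rabs (mu i))). split. pose proof (Rabs_pos (mu i)). nra.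
  intros y. set (w := vsub y mu).
  assert (Hw : w i * w i <= dot n w w) by (apply dot_sq_le; auto).
  assert (Eq : Ew mu c n y = Ew mu (c/2) n y * exp (-(c/2 * dot n w w))).
  { unfold Ew. fold w. rewrite <- exp_plus. f_equal. field. }
  rewrite Eq.
  assert (exp (-(c/2 * dot n w w)) <= exp (-(c/2 * (w i * w i)))) by (apply exp_le; nra).
  specialize (HCb (w i)).
  assert (Hy : Rabs (y i) <= Rabs (w i) + Rabs (mu i)).
  { replace (y i) with (w i + mu i) by (unfold w, vsub; ring). apply Rabs_triang. }
  pose proof (Rabs_pos (w i)). pose proof (Rabs_pos (mu i)). pose proof (Ew_pos mu (c/2) n y).
  pose proof (exp_pos (-(c/2 * (w i * w i)))). pose proof (exp_pos (-(c/2 * dot n w w))).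
  assert ((1 + Rabs (w i)) * exp (-(c/2 * (w i * w i))) <= C) by nra.
  assert ((1 + Rabs (y i)) * exp (-(c/2 * dot n w w)) <= C * (1 + Rabs (mu i))).
  { apply Rle_trans with ((1 + Rabs (w i) + Rabs (mu i)) * exp (-(c/2 * (w i * w i)))).
    pose proof (Rabs_pos (y i)). apply Rmult_le_compat; lra.
    assert (exp (-(c/2 * (w i * w i))) <= C) by nra.
    assert (Rabs (mu i) * exp (-(c/2 * (w i * w i))) <= Rabs (mu i) * C) by (apply Rmult_le_compat_l; lra).
    nra. }
  replace (C * (1 + Rabs (mu i)) * (Ew mu (c / 2) n y * exp (- (c / 2 * dot n w w)))) with
     ((C * (1 + Rabs (mu i))) * exp (- (c / 2 * dot n w w)) * Ew mu (c / 2) n y) by ring.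
  replace ((1 + Rabs (y i)) * (Ew mu (c / 2) n y * exp (- (c / 2 * dot n w w)))) with
     ((1 + Rabs (y i)) * exp (- (c / 2 * dot n w w)) * Ew mu (c / 2) n y) by ring.
  apply Rmult_le_compat_r; lra.
Qed.

Lemma Cls_coord n mu c K L f i : 0 < c -> (i < n)%nat -> 0 <= K -> 0 <= L -> Cls n mu c K L f ->
  exists K' L', 0 <= K' /\ 0 <= L' /\ Cls n mu (c/2) K' L' (fun y => y i * f y).
Proof.
  intros Hc Hi HK HL [D Li].
  destruct (coord_bound n mu c i Hc Hi) as [C [HC HCb]].
  exists (K * C), (K + L + L * C). split. nra. split. nra. split.
  - intros y. rewrite Rabs_mult. pose proof (HCb y). pose proof (D y). pose proof (Rabs_pos (y i)).
    pose proof (Rabs_pos (f y)). pose proof (Ew_pos mu c n y).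
    apply Rle_trans with (Rabs (y i) * (K * Ew mu c n y)). apply Rmult_le_compat_l; lra. nra.
  - intros y j s Hj Hs.
    assert (Hyi : Rabs (upd y j s i - y i) <= Rabs (s - y j)).
    { destruct (Nat.eq_dec i j). subst. rewrite upd_eq. lra. rewrite upd_neq by auto. rewrite Rminus_diag, Rabs_R0. apply Rabs_pos. }
    replace (upd y j s i * f (upd y j s) - y i * f y) with
      ((upd y j s i - y i) * f (upd y j s) + y i * (f (upd y j s) - f y)) by ring.
    eapply Rle_trans. apply Rabs_triang. rewrite !Rabs_mult.
    pose proof (Li y j s Hj Hs). pose proof (D y).
    assert (Hf' : Rabs (f (upd y j s)) <= (K + L) * Ew mu c n y).
    { replace (f (upd y j s)) with (f y + (f (upd y j s) - f y)) by ring.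
      eapply Rle_trans. apply Rabs_triang. pose proof (Rabs_pos (s - y j)). pose proof (Ew_pos mu c n y).
      assert (L * Rabs (s - y j) * Ew mu c n y <= L * Ew mu c n y).
      { apply Rmult_le_compat_r; [lra|]. replace L with (L*1) at 2 by ring. apply Rmult_le_compat_l; lra. }
      lra. }
    pose proof (HCb y). pose proof (Ew_mono mu c (c/2) n y ltac:(lra)).
    pose proof (Rabs_pos (y i)). pose proof (Rabs_pos (s - y j)). pose proof (Rabs_pos (f (upd y j s))).
    pose proof (Rabs_pos (upd y j s i - y i)). pose proof (Rabs_pos (f (upd y j s) - f y)). pose proof (Ew_pos mu c n y).
    pose proof (Ew_pos mu (c/2) n y).
    assert (A1 : Rabs (upd y j s i - y i) * Rabs (f (upd y j s)) <= Rabs (s - y j) * ((K + L) * Ew mu (c/2) n y)).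
    { apply Rmult_le_compat; try lra. nra. }
    assert (A2 : Rabs (y i) * Rabs (f (upd y j s) - f y) <= L * Rabs (s - y j) * (C * Ew mu (c/2) n y)).
    { apply Rle_trans with (Rabs (y i) * (L * Rabs (s - y j) * Ew mu c n y)). apply Rmult_le_compat_l; lra.
      replace (Rabs (y i) * (L * Rabs (s - y j) * Ew mu c n y)) with ((L * Rabs (s - y j)) * (Rabs (y i) * Ew mu c n y)) by ring.
      replace (L * Rabs (s - y j) * (C * Ew mu (c/2) n y)) with ((L * Rabs (s - y j)) * (C * Ew mu (c/2) n y)) by ring.
      apply Rmult_le_compat_l. nra. nra. }
    nra.
Qed.

Lemma Cls_gauss n mu k : 0 < k -> exists LG, 0 <= LG /\ Cls n mu (k/4) 1 LG (Ew mu k n).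
Proof.
  intros Hk. destruct (poly_gauss_bound (k/4)) as [C [HC HCb]]. lra.
  exists (4 * k * exp k * C). split. pose proof (exp_pos k). apply Rmult_le_pos; [|lra]. nra.
  split.
  - intros y. rewrite Rabs_pos_eq by (left; apply Ew_pos). rewrite Rmult_1_l. apply Ew_mono. lra.
  - intros y j s Hj Hs. set (w := vsub y mu). set (Q := dot n w w). set (dl := s - y j).
    assert (Hwj : w j * w j <= Q) by (apply dot_sq_le; auto).
    assert (HQ0 : 0 <= Q) by apply dot_nonneg.
    assert (HQ' : dot n (vsub (upd y j s) mu) (vsub (upd y j s) mu) = Q - w j * w j + (w j + dl) * (w j + dl)).
    { rewrite vsub_upd. fold w. rewrite dot_upd_self by auto. fold Q. f_equal. unfold w, vsub, dl. ring. }
    unfold Ew at 1 2. rewrite HQ'. fold w Q.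
    set (Q' := Q - w j * w j + (w j + dl) * (w j + dl)).
    assert (Hd1 : Rabs dl <= 1) by auto.
    assert (HQ'b : Q/2 - 1 <= Q').
    { unfold Q'. assert (dl * dl <= 1). { pose proof (Rabs_def2b dl 1 Hd1). nra. }
      pose proof (Rle_0_sqr (w j + 2*dl)). unfold Rsqr in *. nra. }
    eapply Rle_trans. apply exp_lip.
    assert (Ha : Rabs (- (k * Q') - - (k * Q)) <= k * Rabs dl * (2 * Rabs (w j) + 1)).
    { replace (- (k * Q') - - (k * Q)) with (-(k * dl * (2 * w j + dl))) by (unfold Q'; ring).
      rewrite Rabs_Ropp, Rabs_mult, (Rabs_mult k dl), (Rabs_pos_eq k) by lra.
      apply Rmult_le_compat_l. pose proof (Rabs_pos dl). nra.
      eapply Rle_trans. apply Rabs_triang. rewrite Rabs_mult, (Rabs_pos_eq 2) by lra. lra. }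
    assert (He1 : exp (-(k * Q')) <= exp k * exp (-(k*Q/2))).
    { rewrite <- exp_plus. apply exp_le. nra. }
    assert (He2 : exp (-(k * Q)) <= exp k * exp (-(k*Q/2))).
    { rewrite <- exp_plus. apply exp_le. nra. }
    assert (He3 : (2 * Rabs (w j) + 1) * exp (-(k*Q/2)) <= 2 * C * Ew mu (k/4) n y).
    { unfold Ew. fold w Q.
      assert (exp (-(k*Q/2)) = exp (-(k/4 * (w j * w j))) * exp (-(k/4*Q)) * exp (-(k/4 * (Q - w j * w j)))).
      { rewrite <- !exp_plus. f_equal. field. }
      rewrite H.
      assert (exp (-(k/4 * (Q - w j * w j))) <= 1). { rewrite <- exp_0. apply exp_le. nra. }
      specialize (HCb (w j)).
      pose proof (exp_pos (-(k/4 * (w j * w j)))). pose proof (exp_pos (-(k/4*Q))).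
      pose proof (exp_pos (-(k/4 * (Q - w j * w j)))). pose proof (Rabs_pos (w j)).
      assert ((1 + Rabs (w j)) * exp (-(k/4 * (w j * w j))) <= C) by nra.
      assert ((2 * Rabs (w j) + 1) * exp (-(k/4 * (w j * w j))) <= 2 * C) by nra.
      apply Rle_trans with ((2 * Rabs (w j) + 1) * exp (-(k/4 * (w j * w j))) * exp (-(k/4*Q)) * 1).
      { rewrite !Rmult_assoc. apply Rmult_le_compat_l. lra. apply Rmult_le_compat_l. lra.
        apply Rmult_le_compat_l; lra. }
      rewrite Rmult_1_r. apply Rmult_le_compat_r; lra. }
    pose proof (Rabs_pos dl). pose proof (Rabs_pos (w j)). pose proof (exp_pos k).
    pose proof (exp_pos (-(k*Q/2))). pose proof (exp_pos (-(k*Q'))). pose proof (exp_pos (-(k*Q))).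
    apply Rle_trans with ((k * Rabs dl * (2 * Rabs (w j) + 1)) * (2 * exp k * exp (-(k*Q/2)))).
    { apply Rmult_le_compat; try lra. apply Rabs_pos. }
    replace (k * Rabs dl * (2 * Rabs (w j) + 1) * (2 * exp k * exp (- (k * Q / 2)))) with
      ((2 * k * exp k * Rabs dl) * ((2 * Rabs (w j) + 1) * exp (- (k * Q / 2)))) by ring.
    replace (4 * k * exp k * C * Rabs dl * Ew mu (k / 4) n y) with ((2 * k * exp k * Rabs dl) * (2 * C * Ew mu (k / 4) n y)) by ring.
    apply Rmult_le_compat_l. apply Rmult_le_pos; [|lra]. nra. lra.
Qed.

Lemma omega_bound u : Rabs (omega u) <= 1.
Proof.
  unfold omega. pose proof (exp_pos (-2*u)). rewrite Rabs_pos_eq.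
  unfold Rdiv. rewrite Rmult_1_l. rewrite <- Rinv_1. apply Rinv_le_contravar; lra.
  apply Rlt_le, Rdiv_lt_0_compat; lra.
Qed.

Lemma omega_lip u v : Rabs (omega u - omega v) <= 2 * Rabs (u - v).
Proof.
  unfold omega. pose proof (exp_pos (-2*u)). pose proof (exp_pos (-2*v)).
  replace (1 / (1 + exp (-2*u)) - 1 / (1 + exp (-2*v))) with
    ((exp (-2*v) - exp (-2*u)) / ((1 + exp (-2*u)) * (1 + exp (-2*v)))) by (field; lra).
  unfold Rdiv. rewrite Rabs_mult, Rabs_inv, (Rabs_pos_eq ((1 + exp (-2*u)) * (1 + exp (-2*v)))) by nra.
  pose proof (exp_lip (-2*v) (-2*u)).
  replace (-2*v - -2*u) with (2*(u-v)) in H1 by ring. rewrite Rabs_mult, (Rabs_pos_eq 2) in H1 by lra.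
  apply Rmult_le_reg_r with ((1 + exp (-2*u)) * (1 + exp (-2*v))). nra.
  rewrite Rmult_assoc, Rinv_l by nra. pose proof (Rabs_pos (u - v)).
  assert (2 * Rabs (u - v) * (exp (-2*v) + exp (-2*u)) <= 2 * Rabs (u - v) * ((1 + exp (-2 * u)) * (1 + exp (-2 * v)))).
  { apply Rmult_le_compat_l. lra. nra. }
  lra.
Qed.

Lemma omega_dot_lip n theta sigma y j s : 0 < sigma -> (j < n)%nat ->
  Rabs (omega (dot n theta (upd y j s) / sigma^2) - omega (dot n theta y / sigma^2))
  <= (2 * (1 + dot n theta theta) / sigma^2) * Rabs (s - y j).
Proof.
  intros Hs Hj. eapply Rle_trans. apply omega_lip.
  rewrite dot_upd_r by auto.
  replace ((dot n theta y + theta j * (s - y j)) / sigma ^ 2 - dot n theta y / sigma ^ 2)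
    with (theta j * (s - y j) / sigma^2) by (field; lra).
  assert (Hs2 : 0 < sigma^2) by (apply pow_lt; lra).
  unfold Rdiv. rewrite !Rabs_mult, Rabs_inv, (Rabs_pos_eq (sigma^2)) by lra.
  assert (Rabs (theta j) <= 1 + dot n theta theta).
  { pose proof (dot_sq_le n theta j Hj). pose proof (Rabs_pos (theta j)).
    assert (Rabs (theta j) * Rabs (theta j) = theta j * theta j) by (rewrite <- Rabs_mult; apply Rabs_pos_eq; nra).
    pose proof (Rle_0_sqr (Rabs (theta j) - 1)). unfold Rsqr in *. nra. }
  pose proof (Rabs_pos (s - y j)). pose proof (Rinv_0_lt_compat _ Hs2).
  replace (2 * (1 + dot n theta theta) * / sigma ^ 2 * Rabs (s - y j)) with (2 * ((1 + dot n theta theta) * Rabs (s - y j) * / sigma^2)) by ring.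
  apply Rmult_le_compat_l. lra.
  rewrite Rmult_assoc. replace ((1 + dot n theta theta) * Rabs (s - y j) * / sigma ^ 2) with ((1 + dot n theta theta) * (Rabs (s - y j) * / sigma ^ 2)) by ring.
  apply Rmult_le_compat_r. nra. auto.
Qed.

Lemma integrand_exists d sigma mu theta i : 0 < sigma -> (i < d)%nat ->
  exists I, is_int_iter d (fun y => y i * (Ew mu (/(2*sigma^2)) d y * omega (dot d theta y / sigma^2))) I.
Proof.
  intros Hs Hi. set (k := /(2*sigma^2)).
  assert (Hk : 0 < k) by (apply Rinv_0_lt_compat; assert (0 < sigma^2) by (apply pow_lt; lra); lra).
  destruct (Cls_gauss d mu k Hk) as [LG [HLG HG]].
  set (M := 2 * (1 + dot d theta theta) / sigma^2).
  assert (HM : 0 <= M). { unfold M. pose proof (dot_nonneg d theta). assert (0 < sigma^2) by (apply pow_lt; lra).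
    apply Rmult_le_pos. lra. left; apply Rinv_0_lt_compat; lra. }
  assert (H2 := Cls_mul_bdd d mu (k/4) 1 LG (Ew mu k d) (fun y => omega (dot d theta y / sigma^2)) 1 M HG ltac:(lra)
     (fun y => omega_bound _) (fun y j s Hj _ => omega_dot_lip d theta sigma y j s Hs Hj)).
  destruct (Cls_coord d mu (k/4) (1*1) (1*LG + M*1) _ i ltac:(lra) Hi ltac:(lra) ltac:(nra) H2) as [K' [L' [HK' [HL' H3]]]].
  apply (exist_int d mu (k/4/2) K' L'). lra. exact H3.
Qed.

Lemma shift_cons t y : shift (cons_vec t y) = y.
Proof. reflexivity. Qed.

Lemma cons0 t y : cons_vec t y 0%nat = t.
Proof. reflexivity. Qed.

Lemma gd_cons k sigma mu t y : 0 < sigma ->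
  gauss_density (S k) sigma mu (cons_vec t y) = ph (mu 0%nat) sigma t * gauss_density k sigma (shift mu) y.
Proof.
  intros Hs. unfold gauss_density, ph, ee.
  change (fun i => cons_vec t y i - mu i) with (vsub (cons_vec t y) mu).
  change (fun i => y i - shift mu i) with (vsub y (shift mu)).
  rewrite vsub_cons, dot_cons.
  pose proof (sqrt2PI_pos sigma Hs).
  assert (E : exp (- ((t - mu 0%nat) * (t - mu 0%nat) + dot k (vsub y (shift mu)) (vsub y (shift mu))) / (2 * sigma ^ 2))
    = exp (- ((t - mu 0%nat) * (t - mu 0%nat)) / (2 * sigma ^ 2)) * exp (- dot k (vsub y (shift mu)) (vsub y (shift mu)) / (2 * sigma ^ 2))).
  { rewrite <- exp_plus. f_equal. field. lra. }
  rewrite E. replace (sqrt (2 * PI * sigma ^ 2) ^ S k) with (sqrt (2 * PI * sigma ^ 2) * sqrt (2 * PI * sigma ^ 2) ^ k) by (simpl; ring). field. split. apply pow_nonzero. lra. lra.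
Qed.

Lemma gauss_moments sigma n : 0 < sigma -> forall mu alpha m A B,
  is_int_iter n (fun y => (A * ((alpha + dot n m y) * (alpha + dot n m y)) + B) * gauss_density n sigma mu y)
    (A * ((alpha + dot n m mu) * (alpha + dot n m mu) + sigma^2 * dot n m m) + B).
Proof.
  intros Hs. induction n; intros mu alpha m A B.
  - simpl. unfold gauss_density. simpl. replace (- 0 / (2 * (sigma * (sigma * 1)))) with 0 by (field; lra).
    rewrite exp_0. field.
  - set (P := dot n (shift m) (shift mu)). set (N' := dot n (shift m) (shift m)).
    exists (fun t => ph (mu 0%nat) sigma t * (A * ((alpha + m 0%nat * t + P) * (alpha + m 0%nat * t + P) + sigma^2 * N') + B)).
    split.
    + intros t. apply (int_ext2 _ _ _ _ _ (int_scal _ _ (ph (mu 0%nat) sigma t) _ (IHn (shift mu) (alpha + m 0%nat * t) (shift m) A B))).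
      * intros y. rewrite gd_cons by auto. rewrite dot_S_shift. rewrite shift_cons, cons0. ring.
      * fold P N'. ring.
    + apply impI_is.
      assert (H := impI_plus _ _ _ _ (impI_scal _ (A * (m 0%nat * m 0%nat)) _ (ph_m2 (mu 0%nat) sigma Hs))
                 (impI_plus _ _ _ _ (impI_scal _ (2 * A * m 0%nat * (alpha + P)) _ (ph_m1 (mu 0%nat) sigma Hs))
                    (impI_scal _ (A * ((alpha + P) * (alpha + P)) + A * sigma^2 * N' + B) _ (ph_int (mu 0%nat) sigma Hs)))).
      apply (impI_ext2 _ _ _ _ H).
      * intros t. cbv beta. ring.
      * rewrite !dot_S_shift. fold P N'. ring.
Qed.

Lemma gd_Ew d sigma mu y : gauss_density d sigma mu y = Ew mu (/(2*sigma^2)) d y / sqrt (2*PI*sigma^2) ^ d.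
Proof.
  unfold gauss_density, Ew. change (fun i => y i - mu i) with (vsub y mu). f_equal. f_equal. unfold Rdiv. ring.
Qed.

Lemma em_exists d sigma ts theta i : 0 < sigma -> (i < d)%nat ->
  exists v, is_int_iter d (fun y => 2 * (y i * omega (dot d theta y / sigma ^ 2)) * mix_density d sigma ts y) v.
Proof.
  intros Hs Hi.
  destruct (integrand_exists d sigma ts theta i Hs Hi) as [I1 H1].
  destruct (integrand_exists d sigma (fun j => - ts j) theta i Hs Hi) as [I2 H2].
  set (N := sqrt (2*PI*sigma^2) ^ d).
  assert (HN : 0 < N) by (apply pow_lt, sqrt2PI_pos; auto).
  eexists. apply (int_ext2 _ _ _ _ _ (int_plus _ _ _ _ _ (int_scal _ _ (/N) _ H1) (int_scal _ _ (/N) _ H2))).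
  - intros y. unfold mix_density. rewrite !gd_Ew. fold N. field. lra.
  - reflexivity.
Qed.

Lemma sum_int d (f : nat -> (nat -> R) -> R) (m : nat -> R) :
  (forall i, (i < d)%nat -> is_int_iter d (f i) (m i)) ->
  forall k, (k <= d)%nat -> is_int_iter d (fun y => dot k m (fun i => f i y)) (dot k m m).
Proof.
  intros H. induction k; intros Hk.
  - apply (int_ext2 _ _ _ _ _ (int_zero d)); reflexivity.
  - apply (int_ext2 _ _ _ _ _ (int_plus _ _ _ _ _ (IHk ltac:(lia)) (int_scal _ _ (m k) _ (H k ltac:(lia))))).
    + intros y. reflexivity.
    + reflexivity.
Qed.

Lemma amgm X c : 0 < c -> 2 * Rabs X <= X * X / c + c.
Proof.
  intros Hc. pose proof (Rle_0_sqr (Rabs X - c)). unfold Rsqr in H.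
  assert (Rabs X * Rabs X = X * X) by (rewrite <- Rabs_mult; apply Rabs_pos_eq; nra).
  apply Rmult_le_reg_r with c; auto. replace ((X*X/c + c)*c) with (X*X + c*c) by (field; lra). nra.
Qed.

Lemma mix_nonneg d sigma ts y : 0 < sigma -> 0 <= mix_density d sigma ts y.
Proof.
  intros Hs. unfold mix_density. rewrite !gd_Ew.
  pose proof (Ew_pos ts (/(2*sigma^2)) d y). pose proof (Ew_pos (fun i => - ts i) (/(2*sigma^2)) d y).
  assert (0 < sqrt (2*PI*sigma^2) ^ d) by (apply pow_lt, sqrt2PI_pos; auto).
  assert (0 < / sqrt (2*PI*sigma^2) ^ d) by (apply Rinv_0_lt_compat; auto).
  unfold Rdiv. nra.
Qed.

Theorem lemma3 (d : nat) (sigma : R) (ts : nat -> R)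
  (a kappa2 r : R) (theta : nat -> R) :
  (1 <= d)%nat -> 0 < sigma ->
  (exists i : nat, (i < d)%nat /\ ts i <> 0) ->
  0 < a < 1 -> 0 < kappa2 < 1 ->
  4 / kappa2 <= r ->
  r <= a * (vnorm d ts / sigma) / sqrt (5 * ln (8 / kappa2)) ->
  a * (vnorm d ts) ^ 2 <= dot d theta ts ->
  vnorm d theta <= r * vnorm d ts ->
  exists m : nat -> R,
    is_EM d sigma ts theta m /\ vnorm d m < kappa2 * r * vnorm d ts.
Proof.
  intros Hd Hs [i0 [Hi0 Hts]] Ha Hk Hr1 Hr2 _ _.
  set (f := fun i y => 2 * (y i * omega (dot d theta y / sigma ^ 2)) * mix_density d sigma ts y).
  assert (Hex : forall i, exists v, (i < d)%nat -> is_int_iter d (f i) v).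
  { intros i. destruct (Nat.lt_ge_cases i d) as [Hi|Hi].
    - destruct (em_exists d sigma ts theta i Hs Hi) as [v Hv]. exists v; auto.
    - exists 0. intros; lia. }
  set (m := fun i => proj1_sig (constructive_indefinite_description _ (Hex i))).
  assert (Hm : forall i, (i < d)%nat -> is_int_iter d (f i) (m i)).
  { intros i Hi. unfold m. destruct (constructive_indefinite_description _ (Hex i)); auto. }
  exists m. split. { intros i Hi. apply Hm; auto. }
  set (S := dot d ts ts). set (T := S + sigma^2). set (Nm := dot d m m).
  assert (HS : 0 < S).
  { pose proof (dot_sq_le d ts i0 Hi0). assert (0 < ts i0 * ts i0). { destruct (Rlt_or_le (ts i0) 0); [nra|]. destruct H0; [nra|congruence]. } fold S in H. lra. }
  assert (Hs2 : 0 < sigma^2) by (apply pow_lt; lra).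
  assert (HT : 0 < T) by (unfold T; lra).
  set (c := 2 * T).
  assert (Hc : 0 < c) by (unfold c; lra).
  assert (H1 := sum_int d f m Hm d (le_n d)). fold Nm in H1.
  assert (H2 := int_plus _ _ _ _ _ (int_scal _ _ (/2) _ (gauss_moments sigma d Hs ts 0 m (/c) c))
                                  (int_scal _ _ (/2) _ (gauss_moments sigma d Hs (fun j => - ts j) 0 m (/c) c))).
  assert (Hle : Nm <= /2 * (/ c * ((0 + dot d m ts) * (0 + dot d m ts) + sigma ^ 2 * dot d m m) + c) +
                      /2 * (/ c * ((0 + dot d m (fun j => - ts j)) * (0 + dot d m (fun j => - ts j)) + sigma ^ 2 * dot d m m) + c)).
  { refine (int_le d _ _ _ _ _ H1 H2). intros y. cbv beta.
    set (X := dot d m y). set (w := omega (dot d theta y / sigma ^ 2)).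
    set (p := mix_density d sigma ts y).
    assert (E1 : dot d m (fun i => f i y) = X * (2 * w * p)).
    { transitivity (dot d m (fun i => y i * (2*w*p))).
      apply dot_ext. intros; split; auto. unfold f. fold w p. ring.
      rewrite dot_scal_r. reflexivity. }
    rewrite E1.
    assert (E2 : p = /2 * gauss_density d sigma ts y + /2 * gauss_density d sigma (fun j => - ts j) y) by reflexivity.
    replace (/ 2 * ((/ c * ((0 + X) * (0 + X)) + c) * gauss_density d sigma ts y) +
             / 2 * ((/ c * ((0 + X) * (0 + X)) + c) * gauss_density d sigma (fun j => - ts j) y))
      with ((X * X / c + c) * p) by (rewrite E2; unfold Rdiv; ring).
    assert (Hp : 0 <= p) by (apply mix_nonneg; auto).
    assert (Hw : Rabs w <= 1) by apply omega_bound.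
    assert (X * (2 * w) <= 2 * Rabs X).
    { assert (X * w <= Rabs X). { rewrite <- (Rmult_1_r (Rabs X)). eapply Rle_trans. apply Rle_abs. rewrite Rabs_mult.
        apply Rmult_le_compat_l. apply Rabs_pos. auto. }
      lra. }
    pose proof (amgm X c Hc).
    replace (X * (2 * w * p)) with ((X * (2 * w)) * p) by ring.
    apply Rmult_le_compat_r; lra. }
  rewrite dot_opp_r in Hle. fold Nm in Hle. set (D := dot d m ts) in *.
  assert (HCS : D * D <= Nm * S) by apply cauchy_schwarz.
  assert (HNm0 : 0 <= Nm) by apply dot_nonneg.
  assert (HNm : Nm <= 4 * T).
  { assert (Hle' : Nm <= / c * (D * D + sigma ^ 2 * Nm) + c).
    { eapply Rle_trans; [exact Hle|]. right. field. lra. }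
    apply Rmult_le_compat_l with (r := c) in Hle'; [|lra].
    replace (c * (/ c * (D * D + sigma ^ 2 * Nm) + c)) with (D * D + sigma ^ 2 * Nm + c * c) in Hle' by (field; lra).
    unfold c, T in *. nra. }
  set (V := vnorm d ts) in *.
  assert (HV : 0 < V) by (unfold V, vnorm; fold S; apply sqrt_lt_R0; auto).
  assert (HV2 : V * V = S) by (unfold V, vnorm; fold S; apply sqrt_sqrt; lra).
  assert (Hln : 1 < ln (8 / kappa2)).
  { rewrite <- (ln_exp 1) at 1. apply ln_increasing. apply exp_pos.
    pose proof exp_le_3. assert (8 < 8 / kappa2).
    { apply Rmult_lt_reg_r with kappa2. lra. unfold Rdiv. rewrite Rmult_assoc, Rinv_l by lra. nra. }
    lra. }
  set (W := sqrt (5 * ln (8 / kappa2))) in *.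
  assert (HW : 1 < W).
  { unfold W. rewrite <- sqrt_1. apply sqrt_lt_1_alt. lra. }
  assert (Hkr : 4 <= kappa2 * r).
  { apply Rmult_le_compat_l with (r := kappa2) in Hr1; [|lra].
    replace (kappa2 * (4 / kappa2)) with 4 in Hr1 by (field; lra). lra. }
  assert (Hr4 : 4 < r).
  { assert (4 < 4 / kappa2). { apply Rmult_lt_reg_r with kappa2. lra. unfold Rdiv. rewrite Rmult_assoc, Rinv_l by lra. nra. } lra. }
  assert (HVs : r < V / sigma).
  { eapply Rle_lt_trans. exact Hr2. assert (0 < V / sigma) by (apply Rdiv_lt_0_compat; lra).
    apply Rmult_lt_reg_r with W. lra. unfold Rdiv at 1. rewrite Rmult_assoc, Rinv_l by lra. nra. }
  assert (HV4 : 4 * sigma < V).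
  { apply Rmult_lt_compat_r with (r := sigma) in HVs; [|lra].
    unfold Rdiv in HVs. rewrite Rmult_assoc, Rinv_l in HVs by lra. nra. }
  assert (HS16 : 16 * sigma^2 < S) by (rewrite <- HV2; simpl; nra).
  unfold vnorm. fold Nm.
  assert (Hgoal : Nm < (kappa2 * r * V) * (kappa2 * r * V)).
  { unfold T in HNm. assert (16 * S <= (kappa2 * r) * (kappa2 * r) * S) by (apply Rmult_le_compat_r; nra).
    replace ((kappa2 * r * V) * (kappa2 * r * V)) with ((kappa2 * r) * (kappa2 * r) * S) by (rewrite <- HV2; ring).
    lra. }
  rewrite <- (sqrt_square (kappa2 * r * V)) by nra.
  apply sqrt_lt_1_alt. lra.
Qed.
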